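(* There exists a left-total optimal machine, but no left-total machine can be effectively optimal.
   Context: A machine is a partial computable function from binary strings to binary strings; for a machine $V$ let $C_V(x)=\min\{|p|\colon V(p)=x\}$ (plain Kolmogorov complexity with respect to $V$). A machine $U$ is optimal if for every machine $V$ there is $c$ with $C_U(x)\le C_V(x)+c$ for all $x$. $U$ is effectively optimal if for every machine $V$ there is a total computable function $h$ with $|h(x)|\le|x|+c$ for some $c$ and all $x$, such that $V(x)=U(h(x))$ for all $x$ (both undefined or both defined and equal). A machine is left-total if for every $n$ the $n$-bit strings in its domain form an initial segment in the lexicographic ordering. *)

(* Defs.v *)
(* A self-contained model of computability:
   partial mu-recursive functions (on lists of naturals), transported to
   binary strings via the bijective base-2 numeration. *)
From Stdlib Require Import List Arith.
Import ListNotations.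

Inductive code : Type :=
| cZero : code
| cSucc : code
| cProj : nat -> code
| cComp : code -> list code -> code
| cPrec : code -> code -> code
| cMin  : code -> code.

Inductive eval : code -> list nat -> nat -> Prop :=
| ev_zero xs : eval cZero xs 0
| ev_succ xs : eval cSucc xs (S (hd 0 xs))
| ev_proj i xs : eval (cProj i) xs (nth i xs 0)
| ev_comp f gs xs ys y :
    evals gs xs ys -> eval f ys y -> eval (cComp f gs) xs y
| ev_prec0 f g xs y : eval f xs y -> eval (cPrec f g) (0 :: xs) y
| ev_precS f g n xs z y :
    eval (cPrec f g) (n :: xs) z -> eval g (n :: z :: xs) y ->
    eval (cPrec f g) (S n :: xs) y
| ev_min f xs n :
    eval f (n :: xs) 0 ->
    (forall m, m < n -> exists k, eval f (m :: xs) (S k)) ->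
    eval (cMin f) xs n
with evals : list code -> list nat -> list nat -> Prop :=
| evs_nil xs : evals [] xs []
| evs_cons g gs xs y ys :
    eval g xs y -> evals gs xs ys -> evals (g :: gs) xs (y :: ys).

Definition bitstring := list bool.

(* bijective base-2 numeration: a bijection bitstring -> nat *)
Fixpoint bs2nat (s : bitstring) : nat :=
  match s with
  | [] => 0
  | b :: t => 2 * bs2nat t + (if b then 2 else 1)
  end.

Definition machine := bitstring -> option bitstring.

Definition partial_computable (V : machine) : Prop :=
  exists e : code, forall x y,
    V x = Some y <-> eval e [bs2nat x] (bs2nat y).

Definition total_computable (h : bitstring -> bitstring) : Prop :=
  partial_computable (fun x => Some (h x)).

(** Plain complexity: [is_C V x n] iff C_V(x) = n
    (i.e. n = min {|p| : V p = x}; no such n exists iff the set is empty). *)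
Definition is_C (V : machine) (x : bitstring) (n : nat) : Prop :=
  (exists p, V p = Some x /\ length p = n) /\
  (forall p, V p = Some x -> n <= length p).

(** C_U(x) <= C_V(x) + c, with the convention C = +infinity when undefined *)
Definition C_le_plus (U V : machine) (c : nat) (x : bitstring) : Prop :=
  forall n, is_C V x n -> exists m, is_C U x m /\ m <= n + c.

Definition optimal (U : machine) : Prop :=
  forall V : machine, partial_computable V ->
    exists c, forall x, C_le_plus U V c x.

Definition effectively_optimal (U : machine) : Prop :=
  forall V : machine, partial_computable V ->
    exists h : bitstring -> bitstring, total_computable h /\
    exists c, forall x, length (h x) <= length x + c /\ V x = U (h x).

Fixpoint lex_lt (x y : bitstring) : bool :=
  match x, y with
  | a :: x', b :: y' =>
      (negb a && b) || (Bool.eqb a b && lex_lt x' y')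
  | _, _ => false
  end.

Definition in_dom (V : machine) (x : bitstring) : Prop := exists y, V x = Some y.

Definition left_total (V : machine) : Prop :=
  forall x y : bitstring, length x = length y ->
    lex_lt y x = true -> in_dom V x -> in_dom V y.

(* Main.v *)
Require Import Defs.
From Stdlib Require Import List Arith Lia ClassicalEpsilon Classical.
Import ListNotations.


Section Ind.
Variable P : code -> list nat -> nat -> Prop.
Variable Q : list code -> list nat -> list nat -> Prop.
Hypothesis hz : forall xs, P cZero xs 0.
Hypothesis hs : forall xs, P cSucc xs (S (hd 0 xs)).
Hypothesis hp : forall i xs, P (cProj i) xs (nth i xs 0).
Hypothesis hc : forall f gs xs ys y, evals gs xs ys -> Q gs xs ys -> eval f ys y -> P f ys y -> P (cComp f gs) xs y.
Hypothesis hp0 : forall f g xs y, eval f xs y -> P f xs y -> P (cPrec f g) (0 :: xs) y.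
Hypothesis hpS : forall f g n xs z y, eval (cPrec f g) (n :: xs) z -> P (cPrec f g) (n :: xs) z ->
   eval g (n :: z :: xs) y -> P g (n :: z :: xs) y -> P (cPrec f g) (S n :: xs) y.
Hypothesis hm : forall f xs n, eval f (n :: xs) 0 -> P f (n :: xs) 0 ->
   (forall m, m < n -> exists k, eval f (m :: xs) (S k) /\ P f (m :: xs) (S k)) -> P (cMin f) xs n.
Hypothesis qn : forall xs, Q [] xs [].
Hypothesis qc : forall g gs xs y ys, eval g xs y -> P g xs y -> evals gs xs ys -> Q gs xs ys -> Q (g :: gs) xs (y :: ys).

Fixpoint eval_ind2 c xs y (H : eval c xs y) {struct H} : P c xs y :=
  match H in eval c xs y return P c xs y with
  | ev_zero xs => hz xs
  | ev_succ xs => hs xs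
  | ev_proj i xs => hp i xs
  | ev_comp f gs xs ys y Hs Hf =>
      hc f gs xs ys y Hs
        ((fix evs_ind2 gs xs ys (H : evals gs xs ys) {struct H} : Q gs xs ys :=
           match H in evals gs xs ys return Q gs xs ys with
           | evs_nil xs => qn xs
           | evs_cons g gs xs y ys Hg Hgs => qc g gs xs y ys Hg (eval_ind2 _ _ _ Hg) Hgs (evs_ind2 _ _ _ Hgs)
           end) gs xs ys Hs) Hf (eval_ind2 _ _ _ Hf)
  | ev_prec0 f g xs y Hf => hp0 f g xs y Hf (eval_ind2 _ _ _ Hf)
  | ev_precS f g n xs z y H1 H2 => hpS f g n xs z y H1 (eval_ind2 _ _ _ H1) H2 (eval_ind2 _ _ _ H2)
  | ev_min f xs n H0 Hlt => hm f xs n H0 (eval_ind2 _ _ _ H0)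
       (fun m hm' => match Hlt m hm' with ex_intro _ k Hk => ex_intro _ k (conj Hk (eval_ind2 _ _ _ Hk)) end)
  end.
End Ind.

Inductive frame : Type :=
| FComp (f : code) (rest : list code) (xs : list nat) (acc : list nat)
| FPrec (g : code) (i n : nat) (xs : list nat)
| FMin (f : code) (n : nat) (xs : list nat).

Inductive st : Type :=
| Ev (c : code) (xs : list nat) (K : list frame)
| Rt (v : nat) (K : list frame).

Definition step (s : st) : st :=
  match s with
  | Ev cZero xs K => Rt 0 K
  | Ev cSucc xs K => Rt (S (hd 0 xs)) K
  | Ev (cProj i) xs K => Rt (nth i xs 0) K
  | Ev (cComp f []) xs K => Ev f [] K
  | Ev (cComp f (g :: rest)) xs K => Ev g xs (FComp f rest xs [] :: K)
  | Ev (cPrec f g) [] K => s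
  | Ev (cPrec f g) (n :: xs) K => Ev f xs (FPrec g 0 n xs :: K)
  | Ev (cMin f) xs K => Ev f (0 :: xs) (FMin f 0 xs :: K)
  | Rt v [] => s
  | Rt v (FComp f [] xs acc :: K) => Ev f (rev (v :: acc)) K
  | Rt v (FComp f (g :: rest) xs acc :: K) => Ev g xs (FComp f rest xs (v :: acc) :: K)
  | Rt z (FPrec g i n xs :: K) =>
      if Nat.eqb i n then Rt z K else Ev g (i :: z :: xs) (FPrec g (S i) n xs :: K)
  | Rt v (FMin f n xs :: K) =>
      match v with 0 => Rt n K | S _ => Ev f (S n :: xs) (FMin f (S n) xs :: K) end
  end.

Fixpoint steps (n : nat) (s : st) : st :=
  match n with 0 => s | S n => steps n (step s) end.

Lemma steps_add : forall a b s, steps (a + b) s = steps b (steps a s).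
Proof. induction a; intros; simpl; auto. Qed.

Lemma steps_fix : forall n s, step s = s -> steps n s = s.
Proof. induction n; intros; simpl; auto. rewrite H; auto. Qed.

Lemma steps_final : forall n v, steps n (Rt v []) = Rt v [].
Proof. intros; apply steps_fix; reflexivity. Qed.

Definition reach s t := exists n, steps n s = t.

Lemma reach_trans : forall s t u, reach s t -> reach t u -> reach s u.
Proof. intros s t u [a Ha] [b Hb]. exists (a + b). rewrite steps_add, Ha; auto. Qed.

Lemma reach_step : forall s t, reach (step s) t -> reach s t.
Proof. intros s t [a Ha]. exists (S a). auto. Qed.

Lemma reach_refl : forall s, reach s s.
Proof. exists 0; auto. Qed.

Lemma proc : forall xs rest ys, Forall2 (fun g y => forall K, reach (Ev g xs K) (Rt y K)) rest ys ->
  forall f K acc v, reach (Rt v (FComp f rest xs acc :: K)) (Ev f (rev (v :: acc) ++ ys) K).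
Proof.
  induction 1; intros.
  - apply reach_step. simpl. rewrite app_nil_r. apply reach_refl.
  - apply reach_step. simpl. eapply reach_trans. apply H.
    eapply reach_trans. apply IHForall2. simpl. rewrite <- app_assoc. simpl. apply reach_refl.
Qed.

Definition Pc (c : code) (xs : list nat) (y : nat) : Prop :=
  (forall K, reach (Ev c xs K) (Rt y K)) /\
  match c, xs with
  | cPrec f g, n :: xs' => forall K m, n <= m ->
      reach (Ev f xs' (FPrec g 0 m xs' :: K)) (Rt y (FPrec g n m xs' :: K))
  | _, _ => True
  end.

Lemma complete' : forall c xs y, eval c xs y -> Pc c xs y.
Proof.
  apply (eval_ind2 Pc
    (fun gs xs ys => Forall2 (fun g y => forall K, reach (Ev g xs K) (Rt y K)) gs ys)).
  - split; auto; intros; apply reach_step, reach_refl.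
  - split; auto; intros; apply reach_step, reach_refl.
  - split; auto; intros; apply reach_step, reach_refl.
  - intros f gs xs ys y Hs Qs Hf [Pf _]. split; auto. intro K. destruct Qs as [|g y1 rest ys' Pg Qr].
    + apply reach_step. simpl. apply Pf.
    + apply reach_step; simpl. eapply reach_trans. apply Pg.
      eapply reach_trans. apply proc; eauto. simpl. apply Pf.
  - intros f g xs y Hf [Pf _]. split.
    + intros K. apply reach_step. simpl. eapply reach_trans. apply Pf.
      apply reach_step. simpl. apply reach_refl.
    + intros K m _. apply Pf.
  - intros f g n xs z y H1 [_ P1] H2 [P2 _].
    assert (Hm : forall K m, S n <= m ->
      reach (Ev f xs (FPrec g 0 m xs :: K)) (Rt y (FPrec g (S n) m xs :: K))).
    { intros K m Hle. eapply reach_trans. apply (P1 K m). lia.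
      apply reach_step. simpl. replace (Nat.eqb n m) with false by (symmetry; apply Nat.eqb_neq; lia).
      apply P2. }
    split; auto.
    intros K. apply reach_step. simpl. eapply reach_trans. apply Hm; auto.
    apply reach_step. simpl. rewrite Nat.eqb_refl. apply reach_refl.
  - intros f xs n H0 [P0 _] Hlt. split; auto. intros K.
    assert (Hj : forall j, j <= n -> reach (Ev f (0 :: xs) (FMin f 0 xs :: K)) (Ev f (j :: xs) (FMin f j xs :: K))).
    { induction j; intros.
      - apply reach_refl.
      - eapply reach_trans. apply IHj; lia.
        destruct (Hlt j) as [k [_ [Pk _]]]. lia.
        eapply reach_trans. apply Pk. apply reach_step. simpl. apply reach_refl. }
    apply reach_step. simpl. eapply reach_trans. apply (Hj n); auto.
    eapply reach_trans. apply P0. apply reach_step. simpl. apply reach_refl.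
  - intros; constructor.
  - intros g gs xs y ys _ [Pg _] _ Q. constructor; auto.
Qed.

Lemma complete : forall c xs y, eval c xs y -> forall K, reach (Ev c xs K) (Rt y K).
Proof. intros. apply complete'; auto. Qed.

Definition app_st (s : st) (K0 : list frame) : st :=
  match s with Ev c xs K => Ev c xs (K ++ K0) | Rt v K => Rt v (K ++ K0) end.

Lemma step_app : forall s K0, (forall v, s <> Rt v []) -> step (app_st s K0) = app_st (step s) K0.
Proof.
  intros [c xs K | v K] K0 H.
  - destruct c; simpl; auto.
    + destruct l; simpl; auto.
    + destruct xs; simpl; auto.
  - destruct K as [|F K]. { exfalso; eapply H; eauto. }
    destruct F; simpl; auto.
    + destruct rest; simpl; auto.
    + destruct (Nat.eqb i n); simpl; auto.
    + destruct v; simpl; auto.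
Qed.

Lemma decomp : forall n s K0 v, steps n (app_st s K0) = Rt v [] ->
  exists j w, j <= n /\ steps j s = Rt w [] /\ steps (n - j) (Rt w K0) = Rt v [].
Proof.
  induction n; intros s K0 v H.
  - simpl in H. destruct s as [c xs K|w K]; simpl in H; [discriminate|].
    injection H as -> H'. apply app_eq_nil in H' as [-> ->].
    exists 0, v. simpl. auto.
  - destruct (match s with Rt w [] => Some w | _ => None end) as [w|] eqn:E.
    + destruct s as [|w' [|]]; try discriminate. inversion E; subst.
      exists 0, w. simpl in H |- *. split; [lia|auto].
    + simpl in H. rewrite step_app in H.
      2:{ intros w' ->. discriminate. }
      destruct (IHn _ _ _ H) as [j [w [Hj [H1 H2]]]].
      exists (S j), w. simpl. split. lia. split; auto.
Qed.

Definition SP (N : nat) := forall c xs K v, steps N (Ev c xs K) = Rt v [] ->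
  exists w j, j <= N /\ eval c xs w /\ steps j (Rt w K) = Rt v [].

Lemma sub_eval : forall N, (forall m, m < N -> SP m) ->
  forall n c xs K v, steps n (Ev c xs K) = Rt v [] -> n < N ->
  exists w j, j <= n /\ eval c xs w /\ steps j (Rt w K) = Rt v [].
Proof.
  intros N IH n c xs K v H Hn.
  change (Ev c xs K) with (app_st (Ev c xs []) K) in H.
  destruct (decomp _ _ _ _ H) as [j [w [Hj [H1 H2]]]].
  destruct (IH j ltac:(lia) _ _ _ _ H1) as [w' [j' [_ [He H3]]]].
  rewrite steps_final in H3. inversion H3; subst.
  exists w, (n - j). split. lia. auto.
Qed.

Lemma inner_comp : forall N, (forall m, m < N -> SP m) -> forall f xs K v rest m acc y,
  m < N -> steps m (Rt y (FComp f rest xs acc :: K)) = Rt v [] ->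
  exists ys w j, evals rest xs ys /\ eval f (rev (y :: acc) ++ ys) w /\ j <= m /\ steps j (Rt w K) = Rt v [].
Proof.
  intros N IH f xs K v rest. induction rest as [|g rest IHr]; intros m acc y Hm H;
    (destruct m as [|m]; [discriminate|]); simpl in H.
  - destruct (sub_eval N IH _ _ _ _ _ H ltac:(lia)) as [w [j [Hj [He Hs]]]].
    exists [], w, j. rewrite app_nil_r. repeat split; auto. constructor.
  - destruct (sub_eval N IH _ _ _ _ _ H ltac:(lia)) as [w1 [j1 [Hj1 [He1 Hs1]]]].
    destruct (IHr j1 _ _ ltac:(lia) Hs1) as [ys [w [j [Hys [Hf [Hj Hs]]]]]].
    exists (w1 :: ys), w, j. repeat split; auto. constructor; auto.
    simpl in Hf. rewrite <- app_assoc in Hf. exact Hf. lia.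
Qed.

Lemma inner_prec : forall N, (forall m, m < N -> SP m) -> forall f g xs K v n d i z m,
  n = i + d -> eval (cPrec f g) (i :: xs) z -> m < N ->
  steps m (Rt z (FPrec g i n xs :: K)) = Rt v [] ->
  exists w j, eval (cPrec f g) (n :: xs) w /\ j <= m /\ steps j (Rt w K) = Rt v [].
Proof.
  intros N IH f g xs K v n d. induction d; intros i z m Hn Hz Hm H;
    (destruct m as [|m]; [discriminate|]); simpl in H.
  - rewrite Hn, Nat.add_0_r, Nat.eqb_refl in H. exists z, m. subst. rewrite Nat.add_0_r. auto.
  - replace (Nat.eqb i n) with false in H by (symmetry; apply Nat.eqb_neq; lia).
    destruct (sub_eval N IH _ _ _ _ _ H ltac:(lia)) as [w1 [j1 [Hj1 [He1 Hs1]]]].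
    destruct (IHd (S i) w1 j1 ltac:(lia) (ev_precS _ _ _ _ _ _ Hz He1) ltac:(lia) Hs1)
      as [w [j [A [B C]]]].
    exists w, j. repeat split; auto. lia.
Qed.

Lemma inner_min : forall N, (forall m, m < N -> SP m) -> forall f xs K v m j u,
  m < N -> eval f (j :: xs) u -> (forall i, i < j -> exists k, eval f (i :: xs) (S k)) ->
  steps m (Rt u (FMin f j xs :: K)) = Rt v [] ->
  exists w j', eval (cMin f) xs w /\ j' <= m /\ steps j' (Rt w K) = Rt v [].
Proof.
  intros N IH f xs K v m. induction m as [m IHm] using lt_wf_ind.
  intros j u Hm Hu Hlt H. destruct m as [|m]; [discriminate|]. simpl in H.
  destruct u as [|k].
  - exists j, m. split. constructor; auto. auto.
  - destruct (sub_eval N IH _ _ _ _ _ H ltac:(lia)) as [w1 [j1 [Hj1 [He1 Hs1]]]].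
    destruct (IHm j1 ltac:(lia) (S j) w1 ltac:(lia) He1) as [w [j' [A [B C]]]]; auto.
    { intros i Hi. destruct (Nat.eq_dec i j). subst; eauto. apply Hlt; lia. }
    exists w, j'. repeat split; auto. lia.
Qed.

Lemma sound_all : forall N, SP N.
Proof.
  intro N. induction N as [N IH] using lt_wf_ind.
  intros c xs K v H. destruct N as [|N]. { discriminate. }
  simpl in H.
  destruct c as [ | | i | f gs | f g | f ]; simpl in H.
  - exists 0, N. split. lia. split; auto. constructor.
  - exists (S (hd 0 xs)), N. split. lia. split; auto. constructor.
  - exists (nth i xs 0), N. split. lia. split; auto. constructor.
  - destruct gs as [|g rest].
    + destruct (sub_eval (S N) IH _ _ _ _ _ H ltac:(lia)) as [w [j [Hj [He Hs]]]].
      exists w, j. split; [lia|split; [|auto]]. econstructor; eauto. constructor.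
    + destruct (sub_eval (S N) IH _ _ _ _ _ H ltac:(lia)) as [w1 [j1 [Hj1 [He1 Hs1]]]].
      destruct (inner_comp (S N) IH _ _ _ _ _ j1 [] w1 ltac:(lia) Hs1) as [ys [w [j [A [B [C D]]]]]].
      exists w, j. split; [lia|split; [|auto]]. econstructor. constructor; eauto. exact B.
  - destruct xs as [|n xs].
    + rewrite steps_fix in H; [discriminate|reflexivity].
    + destruct (sub_eval (S N) IH _ _ _ _ _ H ltac:(lia)) as [w1 [j1 [Hj1 [He1 Hs1]]]].
      destruct (inner_prec (S N) IH f g xs K v n n 0 w1 j1 eq_refl (ev_prec0 _ _ _ _ He1) ltac:(lia) Hs1)
        as [w [j [A [B C]]]].
      exists w, j. repeat split; auto. lia.
  - destruct (sub_eval (S N) IH _ _ _ _ _ H ltac:(lia)) as [w1 [j1 [Hj1 [He1 Hs1]]]].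
    destruct (inner_min (S N) IH f xs K v j1 0 w1 ltac:(lia) He1) as [w [j [A [B C]]]].
    { intros; lia. } auto.
    exists w, j. repeat split; auto. lia.
Qed.

Theorem machine_correct : forall c xs v, eval c xs v <-> exists n, steps n (Ev c xs []) = Rt v [].
Proof.
  split.
  - intros H. apply (complete _ _ _ H []).
  - intros [n H]. destruct (sound_all n c xs [] v H) as [w [j [_ [He Hs]]]].
    rewrite steps_final in Hs. inversion Hs; subst; auto.
Qed.

Lemma steps_stay : forall n m s v, steps n s = Rt v [] -> n <= m -> steps m s = Rt v [].
Proof.
  intros. replace m with (n + (m - n)) by lia. rewrite steps_add, H. apply steps_final.
Qed.

Theorem eval_det : forall c xs y1 y2, eval c xs y1 -> eval c xs y2 -> y1 = y2.
Proof.
  intros c xs y1 y2 H1 H2. apply machine_correct in H1 as [n1 H1]. apply machine_correct in H2 as [n2 H2].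
  pose proof (steps_stay n1 (n1 + n2) _ _ H1 ltac:(lia)).
  pose proof (steps_stay n2 (n1 + n2) _ _ H2 ltac:(lia)). rewrite H in H0. inversion H0; auto.
Qed.


Record pcode := { cd : code; fn : list nat -> nat; ok : forall xs, eval cd xs (fn xs) }.

Definition wrap (F : pcode) (g : list nat -> nat) (H : forall xs, fn F xs = g xs) : pcode.
Proof. refine {| cd := cd F; fn := g |}. intros; rewrite <- H; apply ok. Defined.

Definition pZ : pcode.
Proof. refine {| cd := cZero; fn := fun _ => 0 |}. intros; constructor. Defined.
Definition pS : pcode.
Proof. refine {| cd := cSucc; fn := fun xs => S (nth 0 xs 0) |}. intros [|x xs]; constructor. Defined.
Definition pP (i : nat) : pcode.
Proof. refine {| cd := cProj i; fn := fun xs => nth i xs 0 |}. intros; constructor. Defined.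

Lemma evals_map : forall (Gs : list pcode) xs, evals (map cd Gs) xs (map (fun G => fn G xs) Gs).
Proof. induction Gs; simpl; constructor; auto. apply ok. Qed.

Definition pcomp (F : pcode) (Gs : list pcode) : pcode.
Proof.
  refine {| cd := cComp (cd F) (map cd Gs); fn := fun xs => fn F (map (fun G => fn G xs) Gs) |}.
  intros. econstructor. apply evals_map. apply ok.
Defined.

Definition prec_fn (F G : pcode) (xs : list nat) : nat :=
  nat_rect (fun _ => nat) (fn F [nth 1 xs 0]) (fun n z => fn G [n; z; nth 1 xs 0]) (nth 0 xs 0).

Definition pprec (F G : pcode) : pcode.
Proof.
  refine {| cd := cComp (cPrec (cd F) (cd G)) [cProj 0; cProj 1]; fn := prec_fn F G |}.
  intros. econstructor. repeat econstructor. unfold prec_fn.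
  induction (nth 0 xs 0); simpl.
  - constructor. apply ok.
  - econstructor. apply IHn. apply ok.
Defined.

Definition pifz : pcode.
Proof.
  refine {| cd := cComp (cPrec (cProj 0) (cProj 3)) [cProj 0; cProj 1; cProj 2];
            fn := fun xs => match nth 0 xs 0 with 0 => nth 1 xs 0 | S _ => nth 2 xs 0 end |}.
  intros. econstructor. repeat econstructor. simpl.
  induction (nth 0 xs 0).
  - apply ev_prec0. apply (ev_proj 0).
  - econstructor. apply IHn. apply (ev_proj 3).
Defined.


Definition ppred : pcode.
Proof. refine (wrap (pprec pZ (pP 0)) (fun xs => pred (nth 0 xs 0)) _).
  intros; simpl; unfold prec_fn; destruct (nth 0 xs 0); reflexivity. Defined.

Definition padd : pcode.
Proof. refine (wrap (pprec (pP 0) (pcomp pS [pP 1])) (fun xs => nth 0 xs 0 + nth 1 xs 0) _).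
  intros; simpl; unfold prec_fn; induction (nth 0 xs 0); simpl; auto. Defined.

Definition psub : pcode.
Proof. refine (wrap (pcomp (pprec (pP 0) (pcomp ppred [pP 1])) [pP 1; pP 0])
   (fun xs => nth 0 xs 0 - nth 1 xs 0) _).
  intros; simpl; unfold prec_fn; simpl. induction (nth 1 xs 0); simpl; try lia.
  Defined.

Fixpoint pK0 (n : nat) : pcode := match n with 0 => pZ | S n => pcomp pS [pK0 n] end.
Definition pK (n : nat) : pcode.
Proof. refine (wrap (pK0 n) (fun _ => n) _). induction n; simpl; auto. Defined.

Definition pifeq : pcode.
Proof. refine (wrap (pcomp pifz [pcomp padd [pcomp psub [pP 0; pP 1]; pcomp psub [pP 1; pP 0]]; pP 2; pP 3])
  (fun xs => if Nat.eqb (nth 0 xs 0) (nth 1 xs 0) then nth 2 xs 0 else nth 3 xs 0) _).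
  intros; simpl. destruct (Nat.eqb_spec (nth 0 xs 0) (nth 1 xs 0)).
  - replace (nth 0 xs 0 - nth 1 xs 0 + (nth 1 xs 0 - nth 0 xs 0)) with 0 by lia. auto.
  - destruct (nth 0 xs 0 - nth 1 xs 0 + (nth 1 xs 0 - nth 0 xs 0)) eqn:E; auto. lia.
Defined.

Definition piter (F : pcode) : pcode.
Proof. refine (wrap (pprec (pP 0) (pcomp F [pP 1])) (fun xs => Nat.iter (nth 0 xs 0) (fun s => fn F [s]) (nth 1 xs 0)) _).
  intros; simpl; unfold prec_fn; induction (nth 0 xs 0); simpl; auto. Defined.

Fixpoint tri (n : nat) : nat := match n with 0 => 0 | S m => S m + tri m end.

Definition ptri : pcode.
Proof. refine (wrap (pprec pZ (pcomp padd [pcomp pS [pP 0]; pP 1])) (fun xs => tri (nth 0 xs 0)) _).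
  intros; simpl; unfold prec_fn; induction (nth 0 xs 0); simpl; auto. Defined.

Fixpoint troot (n : nat) : nat :=
  match n with 0 => 0 | S m => let r := troot m in match tri (S r) - S m with 0 => S r | _ => r end end.

Definition ptroot : pcode.
Proof. refine (wrap (pprec pZ (pcomp pifz [pcomp psub [pcomp ptri [pcomp pS [pP 1]]; pcomp pS [pP 0]];
     pcomp pS [pP 1]; pP 1])) (fun xs => troot (nth 0 xs 0)) _).
  intros; simpl; unfold prec_fn; induction (nth 0 xs 0); simpl; auto. Defined.

Lemma troot_spec : forall n, tri (troot n) <= n < tri (S (troot n)).
Proof.
  induction n. simpl; lia.
  change (troot (S n)) with (let r := troot n in match tri (S r) - S n with 0 => S r | _ => r end).
  cbv zeta. remember (troot n) as r.
  destruct (tri (S r) - S n) eqn:E; simpl in *; lia.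
Qed.

Lemma tri_mono : forall a b, a <= b -> tri a <= tri b.
Proof. intros a b H; induction H; simpl; lia. Qed.

Lemma troot_unique : forall n k, tri k <= n < tri (S k) -> troot n = k.
Proof.
  intros n k H. pose proof (troot_spec n).
  destruct (Nat.lt_total (troot n) k) as [L|[L|L]]; auto.
  - pose proof (tri_mono (S (troot n)) k L). lia.
  - pose proof (tri_mono (S k) (troot n) L). lia.
Qed.

Definition pr (a b : nat) : nat := tri (a + b) + b.
Definition p2 (n : nat) : nat := n - tri (troot n).
Definition p1 (n : nat) : nat := troot n - p2 n.

Lemma troot_pr : forall a b, troot (pr a b) = a + b.
Proof. intros; apply troot_unique; unfold pr; simpl; lia. Qed.
Lemma p1_pr : forall a b, p1 (pr a b) = a.
Proof. intros; unfold p1, p2; rewrite troot_pr; unfold pr; lia. Qed.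
Lemma p2_pr : forall a b, p2 (pr a b) = b.
Proof. intros; unfold p2; rewrite troot_pr; unfold pr; lia. Qed.
Lemma pr_surj : forall n, pr (p1 n) (p2 n) = n.
Proof.
  intros; unfold pr, p1, p2. pose proof (troot_spec n). simpl in H.
  replace (troot n - (n - tri (troot n)) + (n - tri (troot n))) with (troot n) by lia. lia.
Qed.
Lemma pr_ge2 : forall a b, b <= pr a b.
Proof. intros; unfold pr; lia. Qed.
Lemma pr_ge1 : forall a b, a <= pr a b.
Proof. intros; unfold pr. assert (a <= tri (a + b)). { clear. induction a; simpl; lia. } lia. Qed.
Lemma pr_inj : forall a b c d, pr a b = pr c d -> a = c /\ b = d.
Proof. intros. split; [rewrite <- (p1_pr a b), <- (p1_pr c d) | rewrite <- (p2_pr a b), <- (p2_pr c d)]; congruence. Qed.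

Arguments pr : simpl never.
Arguments p1 : simpl never.
Arguments p2 : simpl never.

Definition ppr : pcode.
Proof. refine (wrap (pcomp padd [pcomp ptri [pcomp padd [pP 0; pP 1]]; pP 1]) (fun xs => pr (nth 0 xs 0) (nth 1 xs 0)) _).
  intros; reflexivity. Defined.
Definition pp2 : pcode.
Proof. refine (wrap (pcomp psub [pP 0; pcomp ptri [pcomp ptroot [pP 0]]]) (fun xs => p2 (nth 0 xs 0)) _).
  intros; reflexivity. Defined.
Definition pp1 : pcode.
Proof. refine (wrap (pcomp psub [pcomp ptroot [pP 0]; pp2]) (fun xs => p1 (nth 0 xs 0)) _).
  intros; reflexivity. Defined.


Fixpoint encL (l : list nat) : nat := match l with [] => 0 | x :: l => S (pr x (encL l)) end.
Definition hdL (l : nat) := p1 (pred l).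
Definition tlL (l : nat) := p2 (pred l).
Lemma hdL_cons : forall x y, hdL (S (pr x y)) = x.
Proof. intros; unfold hdL; simpl; apply p1_pr. Qed.
Lemma tlL_cons : forall x y, tlL (S (pr x y)) = y.
Proof. intros; unfold tlL; simpl; apply p2_pr. Qed.
Lemma p1_0 : p1 0 = 0. Proof. reflexivity. Qed.
Lemma p2_0 : p2 0 = 0. Proof. reflexivity. Qed.
Lemma hdL_0 : hdL 0 = 0. Proof. reflexivity. Qed.
Lemma tlL_0 : tlL 0 = 0. Proof. reflexivity. Qed.
Arguments hdL : simpl never.
Arguments tlL : simpl never.

Definition nthL (i l : nat) := hdL (Nat.iter i tlL l).
Lemma nthL_enc : forall i xs, nthL i (encL xs) = nth i xs 0.
Proof.
  unfold nthL. induction i; intros [|x xs].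
  - reflexivity.
  - simpl. apply hdL_cons.
  - assert (forall j, Nat.iter j tlL 0 = 0) as H by (induction j; simpl; auto; rewrite IHj; reflexivity).
    rewrite H. reflexivity.
  - rewrite Nat.iter_succ_r. simpl encL. rewrite tlL_cons. apply IHi.
Qed.

Definition revF (s : nat) : nat :=
  match p1 s with 0 => s | _ => pr (tlL (p1 s)) (S (pr (hdL (p1 s)) (p2 s))) end.
Definition revL (l : nat) : nat := p2 (Nat.iter l revF (pr l 0)).

Lemma encL_len : forall xs, length xs <= encL xs.
Proof. induction xs; simpl; auto. pose proof (pr_ge2 a (encL xs)). lia. Qed.

Lemma revF_iter : forall xs acc n, length xs <= n ->
  Nat.iter n revF (pr (encL xs) (encL acc)) = pr 0 (encL (rev xs ++ acc)).
Proof.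
  induction xs; intros acc n Hn.
  - simpl. clear Hn. induction n; simpl; auto. rewrite IHn. unfold revF. rewrite p1_pr. auto.
  - destruct n as [|n]; simpl in Hn; [lia|].
    rewrite Nat.iter_succ_r. simpl encL at 1. unfold revF at 2. rewrite p1_pr.
    rewrite tlL_cons, hdL_cons, p2_pr.
    change (S (pr a (encL acc))) with (encL (a :: acc)). rewrite IHxs by lia.
    simpl. rewrite <- app_assoc. auto.
Qed.

Lemma revL_enc : forall xs, revL (encL xs) = encL (rev xs).
Proof.
  intros. unfold revL. change (pr (encL xs) 0) with (pr (encL xs) (encL [])). rewrite revF_iter by apply encL_len.
  rewrite p2_pr, app_nil_r. auto.
Qed.
Lemma revL_cons : forall x l, revL (S (pr x (encL l))) = encL (rev l ++ [x]).
Proof. intros. apply (revL_enc (x :: l)). Qed.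
Lemma nthL_cons : forall i x l, nthL i (S (pr x (encL l))) = nth i (x :: l) 0.
Proof. intros. apply (nthL_enc i (x :: l)). Qed.
Lemma nthL_0 : forall i, nthL i 0 = nth i (@nil nat) 0.
Proof. intros. apply (nthL_enc i []). Qed.
Arguments nthL : simpl never.
Arguments revL : simpl never.

Lemma iter_ext : forall (f g : nat -> nat), (forall x, f x = g x) -> forall n x, Nat.iter n f x = Nat.iter n g x.
Proof. induction n; simpl; intros; auto. rewrite IHn; auto. Qed.

Definition phd : pcode.
Proof. refine (wrap (pcomp pp1 [pcomp ppred [pP 0]]) (fun xs => hdL (nth 0 xs 0)) _). reflexivity. Defined.
Definition ptl : pcode.
Proof. refine (wrap (pcomp pp2 [pcomp ppred [pP 0]]) (fun xs => tlL (nth 0 xs 0)) _). reflexivity. Defined.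
Definition pnth : pcode.
Proof. refine (wrap (pcomp phd [pcomp (piter ptl) [pP 0; pP 1]]) (fun xs => nthL (nth 0 xs 0) (nth 1 xs 0)) _).
  intros; simpl. unfold nthL. reflexivity. Defined.

Definition P1 e := pcomp pp1 [e].
Definition P2 e := pcomp pp2 [e].
Definition PR a b := pcomp ppr [a; b].
Definition SU e := pcomp pS [e].
Definition HD e := pcomp phd [e].
Definition TL e := pcomp ptl [e].
Definition CONS a b := SU (PR a b).
Definition IFZ c a b := pcomp pifz [c; a; b].
Definition IFEQ a b x y := pcomp pifeq [a; b; x; y].
Definition KK n := pK n.
Definition NTH i l := pcomp pnth [i; l].

Definition prevF : pcode := IFZ (P1 (pP 0)) (pP 0) (PR (TL (P1 (pP 0))) (CONS (HD (P1 (pP 0))) (P2 (pP 0)))).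
Definition prev : pcode.
Proof. refine (wrap (P2 (pcomp (piter prevF) [pP 0; PR (pP 0) (KK 0)])) (fun xs => revL (nth 0 xs 0)) _).
  intros; simpl. unfold revL. f_equal. Defined.
Definition REV e := pcomp prev [e].

Fixpoint encC (c : code) : nat :=
  match c with
  | cZero => pr 0 0 | cSucc => pr 1 0 | cProj i => pr 2 i
  | cComp f gs => pr 3 (pr (encC f) (encL (map encC gs)))
  | cPrec f g => pr 4 (pr (encC f) (encC g))
  | cMin f => pr 5 (encC f)
  end.

Definition encF (F : frame) : nat :=
  match F with
  | FComp f rest xs acc => pr 0 (pr (encC f) (pr (encL (map encC rest)) (pr (encL xs) (encL acc))))
  | FPrec g i n xs => pr 1 (pr (encC g) (pr i (pr n (encL xs))))
  | FMin f n xs => pr 2 (pr (encC f) (pr n (encL xs)))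
  end.

Definition encS (s : st) : nat :=
  match s with
  | Ev c xs K => pr 0 (pr (encC c) (pr (encL xs) (encL (map encF K))))
  | Rt v K => pr 1 (pr v (encL (map encF K)))
  end.

Definition mkRt v K := pr 1 (pr v K).
Definition mkEv c xs K := pr 0 (pr c (pr xs K)).
Definition fCompN f r xs acc := pr 0 (pr f (pr r (pr xs acc))).
Definition fPrecN g i n xs := pr 1 (pr g (pr i (pr n xs))).
Definition fMinN f n xs := pr 2 (pr f (pr n xs)).
Definition consL a b := S (pr a b).

Definition evB (n : nat) : nat :=
  let body := p2 n in let c := p1 body in let xs := p1 (p2 body) in let K := p2 (p2 body) in
  let ct := p1 c in let ca := p2 c in
  if Nat.eqb ct 0 then mkRt 0 K else
  if Nat.eqb ct 1 then mkRt (S (hdL xs)) K else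
  if Nat.eqb ct 2 then mkRt (nthL ca xs) K else
  if Nat.eqb ct 3 then
    (match p2 ca with 0 => mkEv (p1 ca) 0 K
     | S _ => mkEv (hdL (p2 ca)) xs (consL (fCompN (p1 ca) (tlL (p2 ca)) xs 0) K) end) else
  if Nat.eqb ct 4 then
    (match xs with 0 => n
     | S _ => mkEv (p1 ca) (tlL xs) (consL (fPrecN (p2 ca) 0 (hdL xs) (tlL xs)) K) end) else
  if Nat.eqb ct 5 then mkEv ca (consL 0 xs) (consL (fMinN ca 0 xs) K) else n.

Definition rtB (n : nat) : nat :=
  let body := p2 n in let v := p1 body in let KR := p2 body in
  match KR with 0 => n | S _ =>
    let fr := hdL KR in let K' := tlL KR in let ft := p1 fr in let fa := p2 fr in
    if Nat.eqb ft 0 then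
      (match p1 (p2 fa) with
       | 0 => mkEv (p1 fa) (revL (consL v (p2 (p2 (p2 fa))))) K'
       | S _ => mkEv (hdL (p1 (p2 fa))) (p1 (p2 (p2 fa)))
                  (consL (fCompN (p1 fa) (tlL (p1 (p2 fa))) (p1 (p2 (p2 fa))) (consL v (p2 (p2 (p2 fa))))) K')
       end)
    else if Nat.eqb ft 1 then
      (if Nat.eqb (p1 (p2 fa)) (p1 (p2 (p2 fa))) then mkRt v K'
       else mkEv (p1 fa) (consL (p1 (p2 fa)) (consL v (p2 (p2 (p2 fa)))))
              (consL (fPrecN (p1 fa) (S (p1 (p2 fa))) (p1 (p2 (p2 fa))) (p2 (p2 (p2 fa)))) K'))
    else
      (match v with
       | 0 => mkRt (p1 (p2 fa)) K'
       | S _ => mkEv (p1 fa) (consL (S (p1 (p2 fa))) (p2 (p2 fa)))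
                  (consL (fMinN (p1 fa) (S (p1 (p2 fa))) (p2 (p2 fa))) K')
       end)
  end.

Definition stepN (n : nat) : nat := match p1 n with 0 => evB n | S _ => rtB n end.

Arguments mkRt : simpl never.
Arguments mkEv : simpl never.
Arguments fCompN : simpl never.
Arguments fPrecN : simpl never.
Arguments fMinN : simpl never.
Arguments consL : simpl never.
Arguments evB : simpl never.
Arguments rtB : simpl never.
Arguments stepN : simpl never.

Ltac pp := repeat (first [rewrite p1_pr | rewrite p2_pr]).
Ltac fin := unfold mkRt, mkEv, consL, fCompN, fPrecN, fMinN; simpl;
  rewrite ?p1_pr, ?p2_pr, ?hdL_cons, ?tlL_cons, ?revL_cons, ?nthL_cons, ?nthL_0, ?hdL_0, ?tlL_0;
  try reflexivity.

Lemma stepN_ok : forall s, stepN (encS s) = encS (step s).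
Proof.
  intros [c xs K | v K].
  - unfold stepN. simpl encS. rewrite p1_pr. unfold evB. cbv zeta. rewrite !p2_pr, !p1_pr.
    destruct c as [ | | i | f gs | f g | f ]; simpl encC; pp; simpl Nat.eqb; cbv iota beta.
    + reflexivity.
    + destruct xs; fin.
    + rewrite nthL_enc. fin.
    + destruct gs; fin.
    + destruct xs; fin.
    + fin.
  - unfold stepN. simpl encS. rewrite p1_pr. unfold rtB. cbv zeta. rewrite !p2_pr, !p1_pr.
    destruct K as [|F K]; simpl encL; cbv iota beta; [reflexivity|].
    rewrite hdL_cons, tlL_cons.
    destruct F as [f rest xs acc | g i n xs | f n xs]; simpl encF; pp; simpl Nat.eqb; cbv iota beta.
    + destruct rest; fin.
    + destruct (Nat.eqb i n); fin.
    + destruct v; fin.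
Qed.

Definition pmkRt : pcode.
Proof. refine (wrap (PR (KK 1) (PR (pP 0) (pP 1))) (fun xs => mkRt (nth 0 xs 0) (nth 1 xs 0)) _). reflexivity. Defined.
Definition pmkEv : pcode.
Proof. refine (wrap (PR (KK 0) (PR (pP 0) (PR (pP 1) (pP 2)))) (fun xs => mkEv (nth 0 xs 0) (nth 1 xs 0) (nth 2 xs 0)) _). reflexivity. Defined.
Definition pfComp : pcode.
Proof. refine (wrap (PR (KK 0) (PR (pP 0) (PR (pP 1) (PR (pP 2) (pP 3))))) (fun xs => fCompN (nth 0 xs 0) (nth 1 xs 0) (nth 2 xs 0) (nth 3 xs 0)) _). reflexivity. Defined.
Definition pfPrec : pcode.
Proof. refine (wrap (PR (KK 1) (PR (pP 0) (PR (pP 1) (PR (pP 2) (pP 3))))) (fun xs => fPrecN (nth 0 xs 0) (nth 1 xs 0) (nth 2 xs 0) (nth 3 xs 0)) _). reflexivity. Defined.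
Definition pfMin : pcode.
Proof. refine (wrap (PR (KK 2) (PR (pP 0) (PR (pP 1) (pP 2)))) (fun xs => fMinN (nth 0 xs 0) (nth 1 xs 0) (nth 2 xs 0)) _). reflexivity. Defined.
Definition pconsL : pcode.
Proof. refine (wrap (SU (PR (pP 0) (pP 1))) (fun xs => consL (nth 0 xs 0) (nth 1 xs 0)) _). reflexivity. Defined.

Definition MKRT a b := pcomp pmkRt [a; b].
Definition MKEV a b c := pcomp pmkEv [a; b; c].
Definition FCOMP a b c d := pcomp pfComp [a; b; c; d].
Definition FPREC a b c d := pcomp pfPrec [a; b; c; d].
Definition FMIN a b c := pcomp pfMin [a; b; c].
Definition CONSL a b := pcomp pconsL [a; b].

Section PStep.
Let N := pP 0.
Let BODY := P2 N.
Let XS := P1 (P2 BODY).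
Let KE := P2 (P2 BODY).
Let CT := P1 (P1 BODY).
Let CA := P2 (P1 BODY).
Definition pevB0 :=
 IFEQ CT (KK 0) (MKRT (KK 0) KE)
 (IFEQ CT (KK 1) (MKRT (SU (HD XS)) KE)
 (IFEQ CT (KK 2) (MKRT (NTH CA XS) KE)
 (IFEQ CT (KK 3) (IFZ (P2 CA) (MKEV (P1 CA) (KK 0) KE)
                    (MKEV (HD (P2 CA)) XS (CONSL (FCOMP (P1 CA) (TL (P2 CA)) XS (KK 0)) KE)))
 (IFEQ CT (KK 4) (IFZ XS N (MKEV (P1 CA) (TL XS) (CONSL (FPREC (P2 CA) (KK 0) (HD XS) (TL XS)) KE)))
 (IFEQ CT (KK 5) (MKEV CA (CONSL (KK 0) XS) (CONSL (FMIN CA (KK 0) XS) KE))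
  N))))).
Let V := P1 BODY.
Let KR := P2 BODY.
Let K' := TL KR.
Let FA := P2 (HD KR).
Let FT := P1 (HD KR).
Definition prtB0 :=
 IFZ KR N
 (IFEQ FT (KK 0)
    (IFZ (P1 (P2 FA)) (MKEV (P1 FA) (REV (CONSL V (P2 (P2 (P2 FA))))) K')
       (MKEV (HD (P1 (P2 FA))) (P1 (P2 (P2 FA)))
          (CONSL (FCOMP (P1 FA) (TL (P1 (P2 FA))) (P1 (P2 (P2 FA))) (CONSL V (P2 (P2 (P2 FA))))) K')))
 (IFEQ FT (KK 1)
    (IFEQ (P1 (P2 FA)) (P1 (P2 (P2 FA))) (MKRT V K')
       (MKEV (P1 FA) (CONSL (P1 (P2 FA)) (CONSL V (P2 (P2 (P2 FA)))))
          (CONSL (FPREC (P1 FA) (SU (P1 (P2 FA))) (P1 (P2 (P2 FA))) (P2 (P2 (P2 FA)))) K')))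
    (IFZ V (MKRT (P1 (P2 FA)) K')
       (MKEV (P1 FA) (CONSL (SU (P1 (P2 FA))) (P2 (P2 FA))) (CONSL (FMIN (P1 FA) (SU (P1 (P2 FA))) (P2 (P2 FA))) K'))))).
End PStep.

Definition pevB : pcode.
Proof. refine (wrap pevB0 (fun xs => evB (nth 0 xs 0)) _). intros; reflexivity. Defined.
Definition prtB : pcode.
Proof. refine (wrap prtB0 (fun xs => rtB (nth 0 xs 0)) _). intros; reflexivity. Defined.
Definition pstep : pcode.
Proof. refine (wrap (IFZ (P1 (pP 0)) (pcomp pevB [pP 0]) (pcomp prtB [pP 0])) (fun xs => stepN (nth 0 xs 0)) _).
  intros; reflexivity. Defined.


Definition initN e x := mkEv e (consL x 0) 0.
Definition outN (s : nat) : nat :=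
  if Nat.eqb (p1 s) 1 then match p2 (p2 s) with 0 => S (p1 (p2 s)) | S _ => 0 end else 0.
Definition runN e x t := outN (Nat.iter t stepN (initN e x)).

Lemma iter_stepN : forall t s, Nat.iter t stepN (encS s) = encS (steps t s).
Proof.
  induction t; intros; auto. rewrite Nat.iter_succ_r, stepN_ok. simpl. auto.
Qed.

Lemma initN_enc : forall c x, initN (encC c) x = encS (Ev c [x] []).
Proof. reflexivity. Qed.

Lemma outN_enc : forall s y, outN (encS s) = S y <-> s = Rt y [].
Proof.
  intros [c xs K | v K] y; unfold outN; simpl encS; rewrite p1_pr; simpl.
  - split; discriminate.
  - rewrite !p2_pr, p1_pr. destruct K; simpl; split; intros H; inversion H; auto.
Qed.

Theorem run_correct : forall c x y, eval c [x] y <-> exists t, runN (encC c) x t = S y.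
Proof.
  intros. rewrite machine_correct. unfold runN. rewrite initN_enc.
  split; intros [t H]; exists t; rewrite iter_stepN in *; apply outN_enc; auto.
Qed.

Lemma stepN_halt : forall s, p1 s = 1 -> p2 (p2 s) = 0 -> stepN s = s.
Proof.
  intros. unfold stepN. rewrite H. unfold rtB. cbv zeta. rewrite H0. auto.
Qed.

Lemma run_mono : forall e x t t' y, runN e x t = S y -> t <= t' -> runN e x t' = S y.
Proof.
  unfold runN, outN. intros e x t t' y H Ht.
  destruct (Nat.eqb_spec (p1 (Nat.iter t stepN (initN e x))) 1) as [E|]; [|discriminate].
  destruct (p2 (p2 (Nat.iter t stepN (initN e x)))) eqn:E2; [|discriminate].
  replace t' with ((t' - t) + t) by lia. rewrite Nat.iter_add.
  assert (forall k, Nat.iter k stepN (Nat.iter t stepN (initN e x)) = Nat.iter t stepN (initN e x)) as ->.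
  { induction k; simpl; auto. rewrite IHk. apply stepN_halt; auto. }
  rewrite E, E2. auto.
Qed.

Definition pinit : pcode.
Proof. refine (wrap (MKEV (pP 0) (CONSL (pP 1) (KK 0)) (KK 0)) (fun xs => initN (nth 0 xs 0) (nth 1 xs 0)) _). reflexivity. Defined.
Definition pout : pcode.
Proof. refine (wrap (IFEQ (P1 (pP 0)) (KK 1) (IFZ (P2 (P2 (pP 0))) (SU (P1 (P2 (pP 0)))) (KK 0)) (KK 0))
  (fun xs => outN (nth 0 xs 0)) _). reflexivity. Defined.
Definition prun : pcode.
Proof. refine (wrap (pcomp pout [pcomp (piter pstep) [pP 2; pcomp pinit [pP 0; pP 1]]])
  (fun xs => runN (nth 0 xs 0) (nth 1 xs 0) (nth 2 xs 0)) _).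
  intros; reflexivity. Defined.
Arguments runN : simpl never.
Definition RUN a b c := pcomp prun [a; b; c].

Fixpoint par (n : nat) : nat := match n with 0 => 0 | S m => 1 - par m end.
Fixpoint hf (n : nat) : nat := match n with 0 => 0 | S m => hf m + par m end.
Lemma par_2 : forall t, par (2 * t) = 0 /\ par (S (2 * t)) = 1.
Proof.
  induction t. simpl; auto.
  replace (2 * S t) with (S (S (2 * t))) by lia. destruct IHt as [A B].
  split; simpl; simpl in B; rewrite ?A, ?B; simpl; auto.
Qed.
Lemma hf_2 : forall t, hf (2 * t) = t /\ hf (S (2 * t)) = t.
Proof.
  induction t. simpl; auto.
  replace (2 * S t) with (S (S (2 * t))) by lia. destruct IHt as [A B]. destruct (par_2 t) as [C D].
  assert (hf (S (S (2 * t))) = S t) as E. { change (hf (S (2 * t)) + par (S (2 * t)) = S t). rewrite B, D. lia. }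
  split; auto. change (hf (S (S (2 * t))) + par (S (S (2 * t))) = S t). rewrite E.
  change (par (S (S (2 * t)))) with (1 - par (S (2 * t))). rewrite D. lia.
Qed.
Lemma par_hf : forall t, par (2 * t) = 0 /\ par (2 * t + 1) = 1 /\ hf (2 * t) = t /\ hf (2 * t + 1) = t.
Proof. intros. rewrite Nat.add_1_r. destruct (par_2 t), (hf_2 t). auto. Qed.

Definition ppar : pcode.
Proof. refine (wrap (pprec pZ (pcomp psub [KK 1; pP 1])) (fun xs => par (nth 0 xs 0)) _).
  intros; simpl; unfold prec_fn; induction (nth 0 xs 0); simpl; auto. Defined.
Definition phf : pcode.
Proof. refine (wrap (pprec pZ (pcomp padd [pP 1; pcomp ppar [pP 0]])) (fun xs => hf (nth 0 xs 0)) _).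
  intros; simpl; unfold prec_fn; induction (nth 0 xs 0); simpl; auto. Defined.

Definition tailN m := hf (pred m).
Definition bitN m := par (pred m).

Lemma bs_tail : forall b t, tailN (bs2nat (b :: t)) = bs2nat t.
Proof. intros. unfold tailN. change (bs2nat (b :: t)) with (2 * bs2nat t + (if b then 2 else 1)).
  destruct (par_hf (bs2nat t)) as [A [B [C D]]]. destruct b;
  [replace (pred (2 * bs2nat t + 2)) with (2 * bs2nat t + 1) by lia | replace (pred (2 * bs2nat t + 1)) with (2 * bs2nat t) by lia]; auto. Qed.
Lemma bs_bit : forall b t, bitN (bs2nat (b :: t)) = if b then 1 else 0.
Proof. intros. unfold bitN. change (bs2nat (b :: t)) with (2 * bs2nat t + (if b then 2 else 1)).
  destruct (par_hf (bs2nat t)) as [A [B [C D]]]. destruct b;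
  [replace (pred (2 * bs2nat t + 2)) with (2 * bs2nat t + 1) by lia | replace (pred (2 * bs2nat t + 1)) with (2 * bs2nat t) by lia]; auto. Qed.
Arguments tailN : simpl never.
Arguments bitN : simpl never.

Definition ptail : pcode.
Proof. refine (wrap (pcomp phf [pcomp ppred [pP 0]]) (fun xs => tailN (nth 0 xs 0)) _). reflexivity. Defined.
Definition pbit : pcode.
Proof. refine (wrap (pcomp ppar [pcomp ppred [pP 0]]) (fun xs => bitN (nth 0 xs 0)) _). reflexivity. Defined.

Lemma bs2nat_inj : forall x y, bs2nat x = bs2nat y -> x = y.
Proof.
  induction x as [|a x IH]; intros [|b y] H; simpl in H.
  - auto.
  - destruct b; lia.
  - destruct a; lia.
  - destruct a, b; try lia; f_equal; apply IH; lia.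
Qed.

Lemma bs2nat_surj : forall n, exists x, bs2nat x = n.
Proof.
  intro n. induction n as [n IH] using lt_wf_ind. destruct n. exists []; auto.
  destruct (Nat.Even_or_Odd n) as [[k Hk]|[k Hk]].
  - destruct (IH k ltac:(lia)) as [x Hx]. exists (false :: x). simpl. lia.
  - destruct (IH k ltac:(lia)) as [x Hx]. exists (true :: x). simpl. lia.
Qed.

Lemma bs2nat_len : forall x, length x <= bs2nat x.
Proof. induction x; simpl; auto. destruct a; lia. Qed.


Fixpoint lexrank (p : bitstring) : nat :=
  match p with [] => 0 | b :: t => (if b then 2 ^ length t else 0) + lexrank t end.

Lemma lexrank_lt : forall p, lexrank p < 2 ^ length p.
Proof. induction p; simpl; auto. destruct a; lia. Qed.

Lemma lex_lt_rank : forall x y, length x = length y -> (lex_lt y x = true <-> lexrank y < lexrank x).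
Proof.
  induction x as [|b x IH]; intros [|a y] H; simpl in *; try (split; intros; lia || discriminate).
  injection H as H. pose proof (lexrank_lt x). pose proof (lexrank_lt y). rewrite H in *.
  destruct a, b; simpl; rewrite ?IH by auto; split; intros; try lia; try discriminate; auto.
Qed.

Lemma lexrank_inj : forall x y, length x = length y -> lexrank x = lexrank y -> x = y.
Proof.
  induction x as [|b x IH]; intros [|a y] H E; simpl in *; try discriminate; auto.
  injection H as H. pose proof (lexrank_lt x). pose proof (lexrank_lt y). rewrite H in *.
  destruct a, b; f_equal; try (apply IH; auto; lia); lia.
Qed.

Lemma lexrank_exists : forall L r, r < 2 ^ L -> exists p, length p = L /\ lexrank p = r.
Proof.
  induction L; intros r Hr.
  - exists []. simpl in *. split; auto; lia.
  - simpl in Hr. destruct (Nat.lt_ge_cases r (2 ^ L)).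
    + destruct (IHL r H) as [p [A B]]. exists (false :: p). simpl. auto.
    + destruct (IHL (r - 2 ^ L) ltac:(lia)) as [p [A B]]. exists (true :: p). simpl. rewrite A. lia.
Qed.

Definition lrF (s : nat) : nat :=
  match p1 s with 0 => s | S _ => pr (tailN (p1 s)) (pr (p1 (p2 s) + p1 (p2 s) + bitN (p1 s)) (S (p2 (p2 s)))) end.
Definition lrN (m : nat) := Nat.iter m lrF (pr m (pr 0 0)).
Definition lenN m := p2 (p2 (lrN m)).
Definition rankN m := p1 (p2 (lrN m)).

Lemma lrF_cons : forall b p acc len,
  lrF (pr (bs2nat (b :: p)) (pr acc len)) = pr (bs2nat p) (pr (acc + acc + (if b then 1 else 0)) (S len)).
Proof.
  intros. unfold lrF. rewrite p1_pr. destruct (bs2nat (b :: p)) eqn:E. { simpl in E; destruct b; lia. }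
  rewrite <- E, !p2_pr, !p1_pr, bs_tail, bs_bit. auto.
Qed.

Lemma lr_iter : forall p acc len n, length p <= n ->
  Nat.iter n lrF (pr (bs2nat p) (pr acc len)) = pr 0 (pr (acc * 2 ^ length p + lexrank p) (len + length p)).
Proof.
  induction p as [|b p IH]; intros acc len n Hn.
  - simpl. clear Hn. rewrite Nat.mul_1_r, !Nat.add_0_r. induction n; simpl; auto.
    rewrite IHn. unfold lrF. rewrite p1_pr. auto.
  - destruct n as [|n]; simpl in Hn; [lia|]. rewrite Nat.iter_succ_r.
    rewrite lrF_cons, IH by lia.
    f_equal. f_equal. 2: simpl; lia. simpl. destruct b; ring.
Qed.

Lemma lenN_bs : forall p, lenN (bs2nat p) = length p.
Proof. intros. unfold lenN, lrN. rewrite lr_iter by apply bs2nat_len. rewrite !p2_pr. auto. Qed.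
Lemma rankN_bs : forall p, rankN (bs2nat p) = lexrank p.
Proof. intros. unfold rankN, lrN. rewrite lr_iter by apply bs2nat_len. rewrite p2_pr, p1_pr. auto. Qed.
Arguments lenN : simpl never.
Arguments rankN : simpl never.

Definition plrF : pcode.
Proof. refine (wrap (IFZ (P1 (pP 0)) (pP 0) (PR (pcomp ptail [P1 (pP 0)])
   (PR (pcomp padd [pcomp padd [P1 (P2 (pP 0)); P1 (P2 (pP 0))]; pcomp pbit [P1 (pP 0)]]) (SU (P2 (P2 (pP 0)))))))
  (fun xs => lrF (nth 0 xs 0)) _). reflexivity. Defined.
Definition plr : pcode.
Proof. refine (wrap (pcomp (piter plrF) [pP 0; PR (pP 0) (PR (KK 0) (KK 0))]) (fun xs => lrN (nth 0 xs 0)) _).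
  reflexivity. Defined.
Definition plen : pcode.
Proof. refine (wrap (P2 (P2 (pcomp plr [pP 0]))) (fun xs => lenN (nth 0 xs 0)) _). reflexivity. Defined.
Definition prank : pcode.
Proof. refine (wrap (P1 (P2 (pcomp plr [pP 0]))) (fun xs => rankN (nth 0 xs 0)) _). reflexivity. Defined.

Definition pfF (s : nat) : nat :=
  match p1 s with 0 => s | S _ => match bitN (p1 s) with 0 => s | S _ => pr (tailN (p1 s)) (S (p2 s)) end end.
Definition parseS (m : nat) := Nat.iter m pfF (pr m 0).
Definition pvalid m := p1 (parseS m).
Definition pkN m := p2 (parseS m).
Definition pwN m := tailN (p1 (parseS m)).

Lemma pfF_true : forall p k0, pfF (pr (bs2nat (true :: p)) k0) = pr (bs2nat p) (S k0).
Proof.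
  intros. unfold pfF. rewrite p1_pr. destruct (bs2nat (true :: p)) eqn:E. { simpl in E; lia. }
  rewrite <- E, bs_bit, bs_tail, p2_pr. auto.
Qed.
Lemma pfF_false : forall p k0, pfF (pr (bs2nat (false :: p)) k0) = pr (bs2nat (false :: p)) k0.
Proof.
  intros. unfold pfF. rewrite p1_pr. destruct (bs2nat (false :: p)) eqn:E; auto.
  rewrite <- E, bs_bit. auto.
Qed.

Lemma parse_iter : forall k w k0 n, k < n ->
  Nat.iter n pfF (pr (bs2nat (repeat true k ++ false :: w)) k0) = pr (bs2nat (false :: w)) (k0 + k).
Proof.
  induction k; intros w k0 n Hn.
  - change (repeat true 0 ++ false :: w) with (false :: w). rewrite Nat.add_0_r. clear Hn.
    induction n; [reflexivity|]. rewrite Nat.iter_succ_r, pfF_false. exact IHn.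
  - destruct n as [|n]; [lia|]. rewrite Nat.iter_succ_r.
    change (repeat true (S k) ++ false :: w) with (true :: (repeat true k ++ false :: w)).
    rewrite pfF_true, IHk by lia. f_equal. lia.
Qed.

Lemma parse_ok : forall k w, parseS (bs2nat (repeat true k ++ false :: w)) = pr (bs2nat (false :: w)) k.
Proof.
  intros. unfold parseS. apply parse_iter.
  pose proof (bs2nat_len (repeat true k ++ false :: w)). rewrite length_app, repeat_length in H. simpl in H. lia.
Qed.

Lemma parse_vals : forall k w, let m := bs2nat (repeat true k ++ false :: w) in
  pvalid m <> 0 /\ pkN m = k /\ pwN m = bs2nat w.
Proof.
  intros. subst m. unfold pvalid, pkN, pwN. rewrite parse_ok, p1_pr, p2_pr, bs_tail. simpl. split; [lia|auto].
Qed.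
Arguments pvalid : simpl never.
Arguments pkN : simpl never.
Arguments pwN : simpl never.

Definition ppfF : pcode.
Proof. refine (wrap (IFZ (P1 (pP 0)) (pP 0) (IFZ (pcomp pbit [P1 (pP 0)]) (pP 0) (PR (pcomp ptail [P1 (pP 0)]) (SU (P2 (pP 0))))))
  (fun xs => pfF (nth 0 xs 0)) _). reflexivity. Defined.
Definition pparse : pcode.
Proof. refine (wrap (pcomp (piter ppfF) [pP 0; PR (pP 0) (KK 0)]) (fun xs => parseS (nth 0 xs 0)) _). reflexivity. Defined.
Definition pvalidc : pcode.
Proof. refine (wrap (P1 (pcomp pparse [pP 0])) (fun xs => pvalid (nth 0 xs 0)) _). reflexivity. Defined.
Definition pkc : pcode.
Proof. refine (wrap (P2 (pcomp pparse [pP 0])) (fun xs => pkN (nth 0 xs 0)) _). reflexivity. Defined.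
Definition pwc : pcode.
Proof. refine (wrap (pcomp ptail [P1 (pcomp pparse [pP 0])]) (fun xs => pwN (nth 0 xs 0)) _). reflexivity. Defined.

Definition preN (k w : nat) := Nat.iter k (fun v => v + v + 2) (w + w + 1).
Lemma preN_ok : forall k w, preN k (bs2nat w) = bs2nat (repeat true k ++ false :: w).
Proof. induction k; intros; simpl; auto. unfold preN in *. rewrite IHk. simpl. lia. Qed.
Arguments preN : simpl never.
Definition ppre : pcode.
Proof. refine (wrap (pcomp (piter (pcomp padd [pcomp padd [pP 0; pP 0]; KK 2])) [pP 0; pcomp padd [pcomp padd [pP 1; pP 1]; KK 1]])
  (fun xs => preN (nth 0 xs 0) (nth 1 xs 0)) _). reflexivity. Defined.


Definition machine_of (c : code) : machine := fun x =>
  match excluded_middle_informative (exists y, eval c [bs2nat x] (bs2nat y)) with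
  | left H => Some (proj1_sig (constructive_indefinite_description _ H))
  | right _ => None
  end.

Lemma machine_of_spec : forall c x y, machine_of c x = Some y <-> eval c [bs2nat x] (bs2nat y).
Proof.
  intros. unfold machine_of. destruct excluded_middle_informative as [H|H].
  - destruct (constructive_indefinite_description _ H) as [z Hz]. simpl. split.
    + intros E; inversion E; subst; auto.
    + intros E. f_equal. apply bs2nat_inj. eapply eval_det; eauto.
  - split; intros E; [discriminate|]. exfalso; eauto.
Qed.

Lemma machine_of_val : forall c x n, eval c [bs2nat x] n -> exists y, machine_of c x = Some y /\ bs2nat y = n.
Proof.
  intros. destruct (bs2nat_surj n) as [y Hy]. exists y. split; auto. apply machine_of_spec. subst; auto.
Qed.

Lemma machine_of_pc : forall c, partial_computable (machine_of c).
Proof. intros c. exists c. intros. apply machine_of_spec. Qed.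

Lemma ex_least : forall P : nat -> Prop, (exists n, P n) -> exists n, P n /\ forall m, P m -> n <= m.
Proof.
  intros P [n Hn]. induction n as [n IH] using lt_wf_ind.
  destruct (classic (exists m, m < n /\ P m)) as [[m [Hm Pm]]|H].
  - apply (IH m Hm Pm).
  - exists n. split; auto. intros m Pm. destruct (Nat.lt_ge_cases m n); auto. exfalso; eauto.
Qed.

Lemma eval_min : forall (T : pcode) xs n,
  eval (cMin (cd T)) xs n <-> fn T (n :: xs) = 0 /\ forall j, j < n -> fn T (j :: xs) <> 0.
Proof.
  intros. split.
  - intros H. inversion H as [| | | | | |f xs' n' H0 Hlt]; subst. split.
    + eapply eval_det. apply ok. auto.
    + intros j Hj E. destruct (Hlt j Hj) as [k Hk]. pose proof (eval_det _ _ _ _ (ok T (j :: xs)) Hk). lia.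
  - intros [A B]. constructor. rewrite <- A. apply ok.
    intros j Hj. destruct (fn T (j :: xs)) eqn:E. { exfalso; eapply B; eauto. }
    exists n0. rewrite <- E. apply ok.
Qed.

Lemma eval_min_ex : forall (T : pcode) xs, (exists n, fn T (n :: xs) = 0) ->
  exists n, eval (cMin (cd T)) xs n.
Proof.
  intros. destruct (ex_least _ H) as [n [A B]]. exists n. apply eval_min. split; auto.
  intros j Hj E. specialize (B j E). lia.
Qed.

Definition r0N (m t : nat) : nat := match pvalid m with 0 => 0 | S _ => runN (pkN m) (pwN m) t end.
Definition pr0 : pcode.
Proof. refine (wrap (IFZ (pcomp pvalidc [pP 0]) (KK 0) (RUN (pcomp pkc [pP 0]) (pcomp pwc [pP 0]) (pP 1)))
  (fun xs => r0N (nth 0 xs 0) (nth 1 xs 0)) _). reflexivity. Defined.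

Lemma r0_mono : forall q t t' y, r0N q t = S y -> t <= t' -> r0N q t' = S y.
Proof. unfold r0N. intros. destruct (pvalid q); [discriminate|]. eapply run_mono; eauto. Qed.

Lemma r0_prog : forall k w t, r0N (bs2nat (repeat true k ++ false :: w)) t = runN k (bs2nat w) t.
Proof.
  intros. unfold r0N. destruct (parse_vals k w) as [A [B C]].
  destruct (pvalid _); [lia|]. rewrite B, C. auto.
Qed.

Definition goodN (L s : nat) : nat :=
  if Nat.eqb (lenN (p1 s)) L then
    match r0N (p1 s) (p2 s) with 0 => 0 | S _ =>
      match p2 s with 0 => 1 | S _ => match r0N (p1 s) (pred (p2 s)) with 0 => 1 | S _ => 0 end end end
  else 0.
Fixpoint cntN (L s : nat) : nat := match s with 0 => goodN L 0 | S j => cntN L j + goodN L (S j) end.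

Definition pgood : pcode.
Proof. refine (wrap (IFEQ (pcomp plen [P1 (pP 1)]) (pP 0)
   (IFZ (pcomp pr0 [P1 (pP 1); P2 (pP 1)]) (KK 0)
      (IFZ (P2 (pP 1)) (KK 1) (IFZ (pcomp pr0 [P1 (pP 1); pcomp ppred [P2 (pP 1)]]) (KK 1) (KK 0)))) (KK 0))
  (fun xs => goodN (nth 0 xs 0) (nth 1 xs 0)) _). reflexivity. Defined.
Definition pcnt : pcode.
Proof. refine (wrap (pcomp (pprec (pcomp pgood [pP 0; KK 0]) (pcomp padd [pP 1; pcomp pgood [pP 2; SU (pP 0)]])) [pP 1; pP 0])
  (fun xs => cntN (nth 0 xs 0) (nth 1 xs 0)) _).
  intros. simpl. unfold prec_fn. simpl. induction (nth 1 xs 0); simpl; auto. Defined.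
Arguments goodN : simpl never.

Definition testU (s m : nat) : nat :=
  if Nat.eqb (goodN (lenN m) s) 1 then (if Nat.eqb (cntN (lenN m) s) (S (rankN m)) then 0 else 1) else 1.
Definition ptestU : pcode.
Proof. refine (wrap (IFEQ (pcomp pgood [pcomp plen [pP 1]; pP 0]) (KK 1)
  (IFEQ (pcomp pcnt [pcomp plen [pP 1]; pP 0]) (SU (pcomp prank [pP 1])) (KK 0) (KK 1)) (KK 1))
  (fun xs => testU (nth 0 xs 0) (nth 1 xs 0)) _). reflexivity. Defined.
Definition poutU : pcode.
Proof. refine (wrap (pcomp ppred [pcomp pr0 [P1 (pP 0); P2 (pP 0)]]) (fun xs => pred (r0N (p1 (nth 0 xs 0)) (p2 (nth 0 xs 0)))) _).
  reflexivity. Defined.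

Definition Ucode : code := cComp (cd poutU) [cMin (cd ptestU); cProj 0].
Definition Umach : machine := machine_of Ucode.

Lemma inv_comp : forall f gs xs y, eval (cComp f gs) xs y -> exists ys, evals gs xs ys /\ eval f ys y.
Proof. intros. inversion H; subst; eauto. Qed.
Lemma inv_cons : forall g gs xs ys, evals (g :: gs) xs ys -> exists y ys', ys = y :: ys' /\ eval g xs y /\ evals gs xs ys'.
Proof. intros. inversion H; subst; eauto. Qed.
Lemma inv_nil : forall xs ys, evals [] xs ys -> ys = [].
Proof. intros. inversion H; subst; eauto. Qed.
Lemma inv_proj : forall i xs y, eval (cProj i) xs y -> y = nth i xs 0.
Proof. intros. inversion H; subst; eauto. Qed.

Lemma Ucode_spec : forall m y, eval Ucode [m] y <->
  exists s, testU s m = 0 /\ (forall j, j < s -> testU j m <> 0) /\ y = pred (r0N (p1 s) (p2 s)).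
Proof.
  intros. split.
  - intros H. apply inv_comp in H as [ys [Hs Hf]].
    apply inv_cons in Hs as [s [ys1 [-> [Hm Hs]]]]. apply inv_cons in Hs as [m' [ys2 [-> [Hp Hs]]]].
    apply inv_nil in Hs; subst. apply inv_proj in Hp. simpl in Hp; subst.
    apply (eval_min ptestU) in Hm as [A B]. exists s. split; [exact A|split; [exact B|]].
    eapply eval_det. apply Hf. apply (ok poutU).
  - intros [s [A [B ->]]]. econstructor.
    + constructor. apply (eval_min ptestU). split; [exact A|exact B]. constructor. apply (ev_proj 0). constructor.
    + apply (ok poutU [s; m]).
Qed.

Definition hexact q t := r0N q t <> 0 /\ (t = 0 \/ r0N q (pred t) = 0).

Lemma good01 : forall L s, goodN L s = 0 \/ goodN L s = 1.
Proof. intros. unfold goodN. destruct (_ =? _); auto. destruct (r0N _ _); auto. destruct (p2 s); auto.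
  destruct (r0N _ _); auto. Qed.

Lemma good1 : forall L s, goodN L s = 1 <-> lenN (p1 s) = L /\ hexact (p1 s) (p2 s).
Proof.
  intros. unfold goodN, hexact. remember (p1 s) as q. remember (p2 s) as t.
  destruct (Nat.eqb_spec (lenN q) L); [|split; [discriminate| intros [H _]; contradiction]].
  destruct (r0N q t) eqn:E1.
  - split; [discriminate|]. intros [_ [H _]]. contradiction.
  - destruct t as [|t'].
    + split; [intros _; split; [auto|split; [lia|auto]] | auto].
    + simpl pred. destruct (r0N q t') eqn:E2.
      * split; [intros _; split; [auto|split; [lia|right; auto]] | auto].
      * split; [discriminate|]. intros [_ [_ [H|H]]]; lia.
Qed.

Lemma hexact_unique : forall q t1 t2, hexact q t1 -> hexact q t2 -> t1 = t2.
Proof.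
  intros q t1 t2 [A1 B1] [A2 B2].
  assert (forall a b, hexact q a -> hexact q b -> a < b -> False).
  { intros a b [Aa _] [_ [Bb|Bb]] L; [lia|]. destruct (r0N q a) eqn:E; [contradiction|].
    pose proof (r0_mono q a (pred b) n E ltac:(lia)). lia. }
  destruct (Nat.lt_total t1 t2) as [L|[L|L]]; auto; exfalso; eapply H; eauto; split; auto.
Qed.

Lemma cnt_mono : forall L j s, j <= s -> cntN L j <= cntN L s.
Proof. intros L j s H. induction H; simpl; lia. Qed.

Lemma cnt_strict : forall L j s, j < s -> goodN L s = 1 -> cntN L j < cntN L s.
Proof.
  intros L j s H G. destruct s as [|s']; [lia|]. simpl. rewrite G.
  pose proof (cnt_mono L j s' ltac:(lia)). lia.
Qed.

Lemma cnt_ivt : forall L r s, r < cntN L s -> exists s', s' <= s /\ goodN L s' = 1 /\ cntN L s' = S r.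
Proof.
  intros L r s. induction s; intros H.
  - simpl in H. destruct (good01 L 0) as [E|E]; rewrite E in H; [lia|].
    exists 0. split; auto. simpl. split; auto. rewrite E. f_equal. lia.
  - simpl in H. destruct (Nat.lt_ge_cases r (cntN L s)).
    + destruct (IHs H0) as [s' [A B]]. exists s'. split; auto.
    + destruct (good01 L (S s)) as [E|E]; rewrite E in H; [lia|].
      exists (S s). split; auto. split; auto. simpl. rewrite E. lia.
Qed.

Lemma testU0 : forall s m, testU s m = 0 <-> goodN (lenN m) s = 1 /\ cntN (lenN m) s = S (rankN m).
Proof.
  intros. unfold testU. destruct (Nat.eqb_spec (goodN (lenN m) s) 1).
  - destruct (Nat.eqb_spec (cntN (lenN m) s) (S (rankN m))); split; intros; try discriminate; intuition.
  - split; intros; try discriminate. intuition.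
Qed.

Lemma testU_least : forall s m, testU s m = 0 -> forall j, j < s -> testU j m <> 0.
Proof.
  intros s m H j Hj E. apply testU0 in H as [A B]. apply testU0 in E as [C D].
  pose proof (cnt_strict _ _ _ Hj A). lia.
Qed.

Lemma Umach_spec : forall p y, Umach p = Some y <->
  exists s, testU s (bs2nat p) = 0 /\ bs2nat y = pred (r0N (p1 s) (p2 s)).
Proof.
  intros. unfold Umach. rewrite machine_of_spec, Ucode_spec. split.
  - intros [s [A [B C]]]. eauto.
  - intros [s [A B]]. exists s. split; auto. split; auto. apply testU_least; auto.
Qed.

Lemma Umach_dom : forall p, in_dom Umach p <-> exists s, testU s (bs2nat p) = 0.
Proof.
  intros. unfold in_dom. split.
  - intros [y H]. apply Umach_spec in H as [s [A _]]. eauto.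
  - intros [s A]. destruct (bs2nat_surj (pred (r0N (p1 s) (p2 s)))) as [y Hy].
    exists y. apply Umach_spec. eauto.
Qed.

Theorem U_left_total : left_total Umach.
Proof.
  intros x y Hl Hlt Hx. apply Umach_dom in Hx as [s Hs]. apply testU0 in Hs as [A B].
  apply lex_lt_rank in Hlt; auto. rewrite !rankN_bs in *. rewrite !lenN_bs in *.
  destruct (cnt_ivt (length x) (lexrank y) s ltac:(lia)) as [s' [_ [C D]]].
  apply Umach_dom. exists s'. apply testU0. rewrite lenN_bs, rankN_bs, <- Hl. auto.
Qed.

Lemma cnt_filter : forall L s, cntN L s = length (filter (fun j => Nat.eqb (goodN L j) 1) (seq 0 (S s))).
Proof.
  intros L s. induction s.
  - simpl. destruct (good01 L 0) as [E|E]; rewrite E; auto.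
  - rewrite seq_S, filter_app, length_app, <- IHs. simpl.
    destruct (good01 L (S s)) as [E|E]; rewrite E; simpl; lia.
Qed.

Lemma cnt_bound : forall L s, cntN L s <= 2 ^ L.
Proof.
  intros. rewrite cnt_filter. set (l := filter _ _).
  rewrite <- (length_map (fun j => rankN (p1 j)) l). rewrite <- (length_seq (2 ^ L) 0).
  apply NoDup_incl_length.
  - apply NoDup_map_NoDup_ForallPairs; [|apply NoDup_filter, seq_NoDup].
    intros a b Ha Hb E. subst l. apply filter_In in Ha as [_ Ha]. apply filter_In in Hb as [_ Hb].
    apply Nat.eqb_eq, good1 in Ha as [La Ha]. apply Nat.eqb_eq, good1 in Hb as [Lb Hb].
    destruct (bs2nat_surj (p1 a)) as [qa Qa]. destruct (bs2nat_surj (p1 b)) as [qb Qb].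
    rewrite <- Qa in La, E. rewrite <- Qb in Lb, E. rewrite lenN_bs in La, Lb. rewrite !rankN_bs in E.
    assert (qa = qb) by (apply lexrank_inj; auto; lia). subst qb.
    rewrite <- Qa in Ha. rewrite <- Qb in Hb. rewrite Qa in Qb.
    pose proof (hexact_unique _ _ _ Ha Hb). rewrite <- (pr_surj a), <- (pr_surj b). congruence.
  - intros y Hy. apply in_map_iff in Hy as [a [<- Ha]]. subst l. apply filter_In in Ha as [_ Ha].
    apply Nat.eqb_eq, good1 in Ha as [La _].
    destruct (bs2nat_surj (p1 a)) as [qa Qa]. rewrite <- Qa in *. rewrite lenN_bs in La. rewrite rankN_bs.
    apply in_seq. pose proof (lexrank_lt qa). subst L. lia.
Qed.

Lemma cnt_ge_good : forall L s, goodN L s <= cntN L s.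
Proof. intros. destruct s; simpl; lia. Qed.

Lemma is_C_exists : forall (U : machine) x, (exists p, U p = Some x) ->
  exists m, is_C U x m /\ forall p, U p = Some x -> m <= length p.
Proof.
  intros U x [p Hp]. destruct (ex_least (fun m => exists p, U p = Some x /\ length p = m)) as [m [[q [A B]] C]].
  { eauto. }
  exists m. assert (forall p, U p = Some x -> m <= length p) by (intros; apply C; eauto).
  split; auto. split; eauto.
Qed.

Theorem U_optimal : optimal Umach.
Proof.
  intros V [e He]. exists (encC e + 1). intros x n [[p [Hp Hlen]] Hmin].
  apply He in Hp. apply run_correct in Hp as [t Ht].
  set (q := repeat true (encC e) ++ false :: p).
  assert (Hq : forall t, r0N (bs2nat q) t = runN (encC e) (bs2nat p) t) by (intros; apply r0_prog).
  destruct (ex_least (fun t => r0N (bs2nat q) t <> 0)) as [t0 [A0 B0]].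
  { exists t. rewrite Hq, Ht. lia. }
  destruct (r0N (bs2nat q) t0) as [|z] eqn:Ez; [contradiction|].
  assert (z = bs2nat x).
  { pose proof (r0_mono _ _ (t0 + t) _ Ez ltac:(lia)). rewrite Hq in H.
    pose proof (run_mono _ _ _ (t0 + t) _ Ht ltac:(lia)). congruence. }
  subst z.
  set (L := length q). set (s := pr (bs2nat q) t0).
  assert (G : goodN L s = 1).
  { apply good1. unfold s. rewrite p1_pr, p2_pr, lenN_bs. split; auto. split; [lia|].
    destruct t0 as [|t1]; auto. right. destruct (r0N (bs2nat q) (pred (S t1))) eqn:E; auto.
    specialize (B0 t1). simpl in E. rewrite E in B0. specialize (B0 ltac:(lia)). lia. }
  pose proof (cnt_bound L s). pose proof (cnt_ge_good L s). rewrite G in H0.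
  destruct (lexrank_exists L (cntN L s - 1) ltac:(lia)) as [p' [Lp' Rp']].
  assert (Up : Umach p' = Some x).
  { apply Umach_spec. exists s. split.
    - apply testU0. rewrite lenN_bs, rankN_bs, Lp', Rp'. split; auto. lia.
    - unfold s. rewrite p1_pr, p2_pr, Ez. auto. }
  destruct (is_C_exists Umach x) as [m [Cm Mm]]; eauto.
  exists m. split; auto. specialize (Mm p' Up). rewrite Lp' in Mm. unfold L, q in Mm.
  rewrite length_app, repeat_length in Mm. simpl in Mm. lia.
Qed.


Definition R1N k s := runN k (preN k (p1 (p1 s))) (p2 s).
Definition R2N k s := runN k (preN k (p2 (p1 s))) (p2 s).
Definition testVk (k s : nat) : nat :=
  if Nat.eqb (p1 (p1 s)) (p2 (p1 s)) then 1 else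
  match R1N k s with 0 => 1 | S _ =>
  match R2N k s with 0 => 1 | S _ =>
  if Nat.eqb (lenN (pred (R1N k s))) (lenN (pred (R2N k s))) then 0 else 1 end end.
Definition bNk (k s : nat) : nat :=
  match rankN (pred (R1N k s)) - rankN (pred (R2N k s)) with 0 => p2 (p1 s) | S _ => p1 (p1 s) end.
Definition testV (s m : nat) : nat := match pvalid m with 0 => 1 | S _ => testVk (pkN m) s end.
Definition test2 (j s m : nat) : nat := if Nat.eqb (pwN m) (bNk (pkN m) s) then 0 else 1.

Definition pR1 : pcode.
Proof. refine (wrap (RUN (pP 0) (pcomp ppre [pP 0; P1 (P1 (pP 1))]) (P2 (pP 1))) (fun xs => R1N (nth 0 xs 0) (nth 1 xs 0)) _).
  reflexivity. Defined.
Definition pR2 : pcode.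
Proof. refine (wrap (RUN (pP 0) (pcomp ppre [pP 0; P2 (P1 (pP 1))]) (P2 (pP 1))) (fun xs => R2N (nth 0 xs 0) (nth 1 xs 0)) _).
  reflexivity. Defined.
Definition ptestVk : pcode.
Proof. refine (wrap (IFEQ (P1 (P1 (pP 1))) (P2 (P1 (pP 1))) (KK 1)
   (IFZ (pcomp pR1 [pP 0; pP 1]) (KK 1) (IFZ (pcomp pR2 [pP 0; pP 1]) (KK 1)
     (IFEQ (pcomp plen [pcomp ppred [pcomp pR1 [pP 0; pP 1]]]) (pcomp plen [pcomp ppred [pcomp pR2 [pP 0; pP 1]]]) (KK 0) (KK 1)))))
  (fun xs => testVk (nth 0 xs 0) (nth 1 xs 0)) _). reflexivity. Defined.
Definition pbNk : pcode.
Proof. refine (wrap (IFZ (pcomp psub [pcomp prank [pcomp ppred [pcomp pR1 [pP 0; pP 1]]]; pcomp prank [pcomp ppred [pcomp pR2 [pP 0; pP 1]]]])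
   (P2 (P1 (pP 1))) (P1 (P1 (pP 1))))
  (fun xs => bNk (nth 0 xs 0) (nth 1 xs 0)) _). reflexivity. Defined.
Definition ptestV : pcode.
Proof. refine (wrap (IFZ (pcomp pvalidc [pP 1]) (KK 1) (pcomp ptestVk [pcomp pkc [pP 1]; pP 0]))
  (fun xs => testV (nth 0 xs 0) (nth 1 xs 0)) _). reflexivity. Defined.
Definition ptest2 : pcode.
Proof. refine (wrap (IFEQ (pcomp pwc [pP 2]) (pcomp pbNk [pcomp pkc [pP 2]; pP 1]) (KK 0) (KK 1))
  (fun xs => test2 (nth 0 xs 0) (nth 1 xs 0) (nth 2 xs 0)) _). reflexivity. Defined.

Definition Vcode : code := cComp (cMin (cd ptest2)) [cMin (cd ptestV); cProj 0].
Definition Vmach : machine := machine_of Vcode.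

Lemma Vcode_spec : forall m y, eval Vcode [m] y <->
  y = 0 /\ exists s, testV s m = 0 /\ (forall j, j < s -> testV j m <> 0) /\ pwN m = bNk (pkN m) s.
Proof.
  intros. split.
  - intros H. apply inv_comp in H as [ys [Hs Hf]].
    apply inv_cons in Hs as [s [ys1 [-> [Hm Hs]]]]. apply inv_cons in Hs as [m' [ys2 [-> [Hp Hs]]]].
    apply inv_nil in Hs; subst. apply inv_proj in Hp. simpl in Hp; subst.
    apply (eval_min ptestV) in Hm as [A B]. apply (eval_min ptest2) in Hf as [C D].
    simpl in A, B, C, D. unfold test2 in C, D.
    destruct (Nat.eqb_spec (pwN m) (bNk (pkN m) s)); [|discriminate].
    split. { destruct y; auto. exfalso. apply (D 0); auto. lia. }
    exists s. auto.
  - intros [-> [s [A [B C]]]]. econstructor.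
    + constructor. apply (eval_min ptestV). split; [exact A|exact B]. constructor. apply (ev_proj 0). constructor.
    + apply (eval_min ptest2). simpl. unfold test2. rewrite C, Nat.eqb_refl. split; auto. intros; lia.
Qed.

Fixpoint allbs (L : nat) : list bitstring :=
  match L with 0 => [[]] | S L => map (cons false) (allbs L) ++ map (cons true) (allbs L) end.

Lemma allbs_len : forall L p, In p (allbs L) -> length p = L.
Proof.
  induction L; simpl; intros p H. { destruct H as [<-|[]]; auto. }
  apply in_app_or in H as [H|H]; apply in_map_iff in H as [q [<- Hq]]; simpl; f_equal; auto.
Qed.
Lemma allbs_length : forall L, length (allbs L) = 2 ^ L.
Proof. induction L; simpl; auto. rewrite length_app, !length_map. unfold bitstring in *. lia. Qed.
Lemma allbs_nodup : forall L, NoDup (allbs L).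
Proof.
  induction L; simpl. { constructor; auto. constructor. }
  apply NoDup_app.
  - apply NoDup_map_NoDup_ForallPairs; auto. intros a b _ _ E. injection E; auto.
  - apply NoDup_map_NoDup_ForallPairs; auto. intros a b _ _ E. injection E; auto.
  - intros a Ha Hb. apply in_map_iff in Ha as [q [<- _]]. apply in_map_iff in Hb as [r [E _]]. discriminate.
Qed.

Lemma pigeon : forall (A : Type) (f : A -> nat) l, NoDup l -> ~ NoDup (map f l) ->
  exists a b, In a l /\ In b l /\ a <> b /\ f a = f b.
Proof.
  intros. apply NNPP. intros C. apply H0. apply NoDup_map_NoDup_ForallPairs; auto.
  intros a b Ha Hb E. apply NNPP. intros N. apply C. exists a, b. auto.
Qed.

Lemma pow_ge : forall L, 2 * L <= 2 ^ L.
Proof. induction L; simpl; auto. destruct L; simpl in *; lia. Qed.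

Theorem part2 : forall U : machine, partial_computable U -> left_total U -> ~ effectively_optimal U.
Proof.
  intros U _ LT EO. destruct (EO Vmach (machine_of_pc Vcode)) as [h [[e He] [c Hc]]].
  assert (Hh : forall x, eval e [bs2nat x] (bs2nat (h x))) by (intros; apply He; auto).
  set (k := encC e).
  set (P := fun w => repeat true k ++ false :: w).
  assert (HP : forall w, bs2nat (P w) = preN k (bs2nat w)) by (intros; symmetry; apply preN_ok).
  assert (Hrun : forall w t o, runN k (bs2nat (P w)) t = S o -> o = bs2nat (h (P w))).
  { intros. assert (eval e [bs2nat (P w)] o) by (apply run_correct; eauto).
    eapply eval_det; eauto. }
  assert (Ex : exists s, testVk k s = 0).
  { set (Lw := k + c + 3).
    assert (~ NoDup (map (fun w => length (h (P w))) (allbs Lw))).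
    { intros ND. pose proof (NoDup_incl_length ND (l' := seq 0 (k + Lw + c + 2))) as H.
      rewrite length_map, allbs_length, length_seq in H.
      assert (2 ^ Lw <= k + Lw + c + 2).
      { apply H. intros y Hy. apply in_map_iff in Hy as [w [<- Hw]]. apply in_seq.
        destruct (Hc (P w)) as [Hl _]. unfold P in Hl |- *. rewrite length_app, repeat_length in Hl.
        simpl in Hl. rewrite (allbs_len _ _ Hw) in Hl. lia. }
      pose proof (pow_ge Lw). lia. }
    destruct (pigeon _ _ _ (allbs_nodup Lw) H) as [w1 [w2 [_ [_ [Hne Hf]]]]].
    destruct (proj1 (run_correct e (bs2nat (P w1)) _) (Hh (P w1))) as [t1 T1].
    destruct (proj1 (run_correct e (bs2nat (P w2)) _) (Hh (P w2))) as [t2 T2].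
    exists (pr (pr (bs2nat w1) (bs2nat w2)) (t1 + t2)).
    unfold testVk, R1N, R2N. rewrite !p1_pr, !p2_pr.
    destruct (Nat.eqb_spec (bs2nat w1) (bs2nat w2)) as [E|_]. { apply bs2nat_inj in E. contradiction. }
    rewrite <- !HP. fold k in T1, T2.
    rewrite (run_mono _ _ _ (t1 + t2) _ T1) by lia. rewrite (run_mono _ _ _ (t1 + t2) _ T2) by lia. simpl.
    rewrite !lenN_bs. simpl in Hf. rewrite Hf, Nat.eqb_refl. auto. }
  destruct (ex_least _ Ex) as [s [Hs Hmin]].
  assert (HtV : forall w j, testV j (bs2nat (P w)) = testVk k j).
  { intros. unfold testV. destruct (parse_vals k w) as [A [B _]]. fold (P w) in A, B.
    destruct (pvalid _); [lia|]. rewrite B. auto. }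
  assert (Hpw : forall w, pwN (bs2nat (P w)) = bs2nat w) by (intros; apply (parse_vals k w)).
  assert (Hpk : forall w, pkN (bs2nat (P w)) = k) by (intros; apply (parse_vals k w)).
  assert (Claim : forall A B, A <> B -> length (h (P A)) = length (h (P B)) ->
            lexrank (h (P A)) <= lexrank (h (P B)) -> bNk k s = bs2nat B -> False).
  { intros A B Hne Hl Hr Hb.
    assert (VB : Vmach (P B) = Some []).
    { apply machine_of_spec. apply Vcode_spec. split; auto. exists s.
      rewrite HtV, Hpw, Hpk. split; auto. split; auto. intros j Hj E. rewrite HtV in E.
      specialize (Hmin j E). lia. }
    destruct (Hc (P B)) as [_ HB]. rewrite VB in HB.
    assert (DA : in_dom U (h (P A))).
    { destruct (list_eq_dec Bool.bool_dec (h (P A)) (h (P B))) as [E|E].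
      - rewrite E. exists []. auto.
      - apply (LT (h (P B)) (h (P A))); [auto| |exists []; auto].
        apply lex_lt_rank; auto. destruct (Nat.eq_dec (lexrank (h (P A))) (lexrank (h (P B)))); [|lia].
        exfalso. apply E. apply lexrank_inj; auto. }
    destruct DA as [y Hy]. destruct (Hc (P A)) as [_ HA]. rewrite <- HA in Hy.
    apply machine_of_spec, Vcode_spec in Hy as [_ [s' [A1 [A2 A3]]]].
    rewrite Hpw, Hpk in A3.
    assert (s' = s).
    { rewrite HtV in A1. destruct (Nat.lt_total s' s) as [L|[L|L]]; auto.
      - specialize (Hmin s' A1). lia.
      - exfalso. apply (A2 s L). rewrite HtV. auto. }
    subst s'. rewrite Hb in A3. apply bs2nat_inj in A3. auto. }
  destruct (bs2nat_surj (p1 (p1 s))) as [W1 E1]. destruct (bs2nat_surj (p2 (p1 s))) as [W2 E2].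
  unfold testVk in Hs. unfold bNk in Claim.
  destruct (Nat.eqb_spec (p1 (p1 s)) (p2 (p1 s))) as [_|Hne]; [discriminate|].
  destruct (R1N k s) as [|o1] eqn:R1; [discriminate|]. destruct (R2N k s) as [|o2] eqn:R2; [discriminate|].
  simpl in Hs, Claim. destruct (Nat.eqb_spec (lenN o1) (lenN o2)) as [Hlen|]; [|discriminate].
  unfold R1N in R1. unfold R2N in R2. rewrite <- E1, <- HP in R1. rewrite <- E2, <- HP in R2.
  apply Hrun in R1. apply Hrun in R2. subst o1 o2. rewrite !lenN_bs in Hlen. rewrite !rankN_bs in Claim.
  assert (W1 <> W2) by (intros ->; congruence).
  destruct (lexrank (h (P W1)) - lexrank (h (P W2))) eqn:D.
  - apply (Claim W1 W2); auto. lia.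
  - apply (Claim W2 W1); auto. lia.
Qed.


Theorem proposition2p7 :
  (exists U : machine, partial_computable U /\ left_total U /\ optimal U) /\
  (forall U : machine, partial_computable U -> left_total U ->
     ~ effectively_optimal U).
Proof.
  split.
  - exists Umach. split; [apply machine_of_pc|split; [apply U_left_total|apply U_optimal]].
  - exact part2.
Qed.
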